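(* Let $\mathbf G=(G,\le,\cdot,/,0,1)$ be a left-residuated po-groupoid satisfying the double negation law $\neg\neg x=x$ and the equation $(x\to y)\to y=(y\to x)\to x$ for all $x,y\in G$. Then $(G,\le)$ is a join-semilattice in which $x\vee y=(x\to y)\to y$ for all $x,y$. Moreover, for every $a\in G$, the map $\gamma_a\colon[a)\to[a)$, $\gamma_a(x)=x\to a$, is a well-defined antitone involution on the principal filter $[a)=\{x\in G: a\le x\}$ (i.e. $x\le y$ implies $\gamma_a(y)\le\gamma_a(x)$, and $\gamma_a(\gamma_a(x))=x$).
   Context: A (bounded integral) left-residuated po-groupoid is a structure $\mathbf G=(G,\le,\cdot,/,0,1)$ where $(G,\le,0,1)$ is a bounded poset with least element $0$ and greatest element $1$, $\cdot$ is a binary operation on $G$ with $1\cdot x=x\cdot 1=x$ for all $x$ (no associativity, commutativity or monotonicity is assumed), and $/$ is a binary operation on $G$ satisfying the left residuation law: for all $x,y,z\in G$, $x\cdot y\le z\iff x\le z/y$. The negation is defined by $\neg x:=0/x$ and the implication by $x\to y:=\neg x/\neg y$. *)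

(* Defs.v *)
Record LRPOG := {
  car :> Type;
  le : car -> car -> Prop;
  mul : car -> car -> car;
  rdiv : car -> car -> car;
  zero : car;
  one : car;
  le_refl : forall x, le x x;
  le_antisym : forall x y, le x y -> le y x -> x = y;
  le_trans : forall x y z, le x y -> le y z -> le x z;
  zero_least : forall x, le zero x;
  one_greatest : forall x, le x one;
  mul_1l : forall x, mul one x = x;
  mul_1r : forall x, mul x one = x;
  residuation : forall x y z, le (mul x y) z <-> le x (rdiv z y)
}.

Definition neg (G : LRPOG) (x : G) : G := rdiv G (zero G) x.
Definition impl (G : LRPOG) (x y : G) : G := rdiv G (neg G x) (neg G y).

Definition is_join (G : LRPOG) (x y j : G) : Prop :=
  le G x j /\ le G y j /\ (forall z, le G x z -> le G y z -> le G j z).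

(* Main.v *)
Require Import Defs.

Section S.
Variable G : LRPOG.
Notation "x <== y" := (le G x y) (at level 70).

Lemma L1 x x' y : x <== x' -> mul G x y <== mul G x' y.
Proof. intros H. apply residuation. apply le_trans with x'; auto.
  apply residuation, le_refl. Qed.
Lemma L2 z z' y : z <== z' -> rdiv G z y <== rdiv G z' y.
Proof. intros H. apply residuation. apply le_trans with z; auto.
  apply residuation, le_refl. Qed.
Lemma L3 y z : y <== z <-> rdiv G z y = one G.
Proof. split; intros H.
 - apply le_antisym. apply one_greatest. apply residuation. rewrite mul_1l; auto.
 - rewrite <- (mul_1l G y). apply residuation. rewrite H. apply le_refl. Qed.
Lemma L4 w : mul G (zero G) w = zero G.
Proof. apply le_antisym; [|apply zero_least]. apply residuation, zero_least. Qed.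
Lemma L5 y : mul G (neg G y) y = zero G.
Proof. apply le_antisym; [|apply zero_least]. apply residuation, le_refl. Qed.
Lemma L6 z : rdiv G z (one G) = z.
Proof. apply le_antisym.
 - rewrite <- (mul_1r G (rdiv G z (one G))). apply residuation, le_refl.
 - apply residuation. rewrite mul_1r. apply le_refl. Qed.
End S.

Theorem lemma4 (G : LRPOG)
  (dneg : forall x : G, neg G (neg G x) = x)
  (hcomm : forall x y : G, impl G (impl G x y) y = impl G (impl G y x) x) :
  (* (G, <=) is a join-semilattice with x \/ y = (x -> y) -> y *)
  (forall x y : G, is_join G x y (impl G (impl G x y) y)) /\
  (* for each a, gamma_a x := x -> a is an antitone involution on [a) *)
  (forall a : G,
     (forall x : G, le G a x -> le G a (impl G x a)) /\
     (forall x y : G, le G a x -> le G a y -> le G x y ->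
        le G (impl G y a) (impl G x a)) /\
     (forall x : G, le G a x -> impl G (impl G x a) a = x)).
Proof.
  assert (N1 : neg G (one G) = zero G) by (unfold neg; apply L6).
  assert (I1 : forall y, impl G (one G) y = y).
  { intros y. unfold impl. rewrite N1. apply dneg. }
  assert (L10 : forall x y, le G x y -> le G (neg G y) (neg G x)).
  { intros x y H. apply L3 in H.
    assert (E := hcomm (neg G y) (neg G x)).
    unfold impl at 2 in E. rewrite !dneg, H, I1 in E.
    unfold impl at 2 in E. rewrite !dneg in E.
    rewrite E. unfold impl. rewrite dneg. apply residuation.
    rewrite L5. unfold neg. apply residuation. rewrite L4. apply le_refl. }
  assert (L11 : forall x y, le G x y -> impl G x y = one G).
  { intros x y H. unfold impl. apply L3. auto. }
  assert (L12 : forall x y a, le G x y -> le G (impl G y a) (impl G x a)).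
  { intros x y a H. unfold impl. apply L2. auto. }
  assert (L13 : forall a x, le G a x -> impl G (impl G x a) a = x).
  { intros a x H. rewrite hcomm, (L11 a x H), I1; auto. }
  split.
  - intros x y. repeat split.
    + rewrite hcomm. pattern x at 1; rewrite <- (I1 x). apply L12, one_greatest.
    + pattern y at 1; rewrite <- (I1 y). apply L12, one_greatest.
    + intros z Hx Hy. rewrite <- (L13 y z Hy). apply L12, L12, Hx.
  - intros a. repeat split.
    + intros x _. pattern a at 1; rewrite <- (I1 a). apply L12, one_greatest.
    + intros x y _ _ H. apply L12, H.
    + apply L13.
Qed.
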